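(* Let $1\le b\le k$ be integers. The number of words $w$ of length $k$ over the alphabet $\{1,\dots,b\}$ such that every letter $1,\dots,b$ occurs in $w$ at least once and $w$ avoids each of the patterns $111$, $212$, $112$ and $213$ equals $$d_{k,b}=\binom{b}{k-b}C_b,$$ where $C_b=\frac{1}{b+1}\binom{2b}{b}$ is the $b$-th Catalan number (and the binomial coefficient is $0$ when $k-b>b$).
   Context: A word $w$ contains a pattern $p=p_1\cdots p_m$ (a word over positive integers) if $w$ has a subsequence $w_{i_1}\cdots w_{i_m}$, $i_1<\dots<i_m$, that is order-isomorphic to $p$, i.e. $w_{i_s}<w_{i_t}$ iff $p_s<p_t$ and $w_{i_s}=w_{i_t}$ iff $p_s=p_t$ for all $s,t$; otherwise $w$ avoids $p$. *)

(* Defs.v *)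
From mathcomp Require Import all_boot.
Set Implicit Arguments. Unset Strict Implicit. Unset Printing Implicit Defensive.

Definition contains (w p : seq nat) : bool :=
  [exists f : {ffun 'I_(size p) -> 'I_(size w)},
     [forall s : 'I_(size p), forall t : 'I_(size p),
        [&& (s < t) ==> (f s < f t),
            (nth 0 w (f s) < nth 0 w (f t)) == (nth 0 p s < nth 0 p t) &
            (nth 0 w (f s) == nth 0 w (f t)) == (nth 0 p s == nth 0 p t)]]].

Definition avoids (w p : seq nat) : bool := ~~ contains w p.

Definition catalan (b : nat) : nat := 'C(b.*2, b) %/ b.+1.

(* words of length k over {1..b}: letter i : 'I_b represents the letter i+1 *)
Definition word_of (b k : nat) (w : k.-tuple 'I_b) : seq nat :=
  [seq (val i).+1 | i <- w].

(* Main.v *)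
Require Import Defs.
From mathcomp Require Import all_boot.
From mathcomp Require Import zify.
Set Implicit Arguments. Unset Strict Implicit. Unset Printing Implicit Defensive.

Definition trip (a b c : nat) : bool :=
  [|| (a == b) && (b == c), (a == c) && (b < a), (a == b) && (a < c) | (b < a) && (a < c)].

Definition bad (w : seq nat) : Prop := exists a b c, subseq [:: a; b; c] w /\ trip a b c.

Lemma subseq_catP (s u v : seq nat) : subseq s (u ++ v) ->
  exists s1 s2, s = s1 ++ s2 /\ subseq s1 u /\ subseq s2 v.
Proof.
elim: u s => [|y u IH] s /=; first by move=> h; exists [::], s.
case: s => [|x s]; first by move=> _; exists [::], [::]; rewrite !sub0seq.
case: eqP => [-> | nxy] h.
  have [s1 [s2 [-> [h1 h2]]]] := IH _ h.
  by exists (y :: s1), s2; rewrite /= eqxx.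
have [s1 [s2 [e [h1 h2]]]] := IH _ h.
exists s1, s2; split=> //; split=> //.
exact: subseq_trans h1 (subseq_cons _ _).
Qed.

Lemma tripP a b c : trip a b c ->
  (a = b /\ b = c) \/ (a = c /\ b < a) \/ (a = b /\ a < c) \/ (b < a /\ a < c).
Proof. by rewrite /trip; case/or4P => /andP [] /= h1 h2; lia. Qed.

Lemma tripI a b c :
  (a = b /\ b = c) \/ (a = c /\ b < a) \/ (a = b /\ a < c) \/ (b < a /\ a < c) -> trip a b c.
Proof.
rewrite /trip => h; apply/or4P.
case: h => [[-> ->]|[[-> h]|[[-> h]|[h1 h2]]]].
- by apply: Or41; rewrite !eqxx.
- by apply: Or42; rewrite eqxx h.
- by apply: Or43; rewrite eqxx h.
- by apply: Or44; rewrite h1 h2.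
Qed.

Lemma bad_sub u w : subseq u w -> bad u -> bad w.
Proof. by move=> h [a [b [c [h1 h2]]]]; exists a, b, c; split=> //; exact: subseq_trans h1 h. Qed.

Lemma sub_nil_bad : ~ bad [::].
Proof. by case=> a [b [c []]]. Qed.

Lemma sub3_cat (a b c : nat) u v : subseq [:: a; b; c] (u ++ v) ->
  [\/ subseq [:: a; b; c] u, subseq [:: a; b] u /\ c \in v,
      a \in u /\ subseq [:: b; c] v | subseq [:: a; b; c] v].
Proof.
move=> /subseq_catP [s1 [s2 [e [h1 h2]]]].
case: s1 e h1 => [|x1 [|x2 [|x3 [|x4 s1]]]] /= e h1.
- by rewrite -e in h2; apply: Or44.
- case: e => -> e; rewrite -e in h2; apply: Or43; split=> //.
  by rewrite -sub1seq.
- case: e => -> -> e; rewrite -e sub1seq in h2; exact: Or42.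
- by case: e => -> -> -> e; apply: Or41.
- by case: e.
Qed.

Lemma sub2_cat (a b : nat) u v : subseq [:: a; b] (u ++ v) ->
  [\/ subseq [:: a; b] u, a \in u /\ b \in v | subseq [:: a; b] v].
Proof.
move=> /subseq_catP [s1 [s2 [e [h1 h2]]]].
case: s1 e h1 => [|x1 [|x2 [|x3 s1]]] /= e h1.
- by rewrite -e in h2; apply: Or33.
- by case: e => -> e; rewrite -e sub1seq in h2; rewrite -sub1seq; apply: Or32.
- by case: e => -> -> e; apply: Or31.
- by case: e.
Qed.

Lemma sub_cons3 (a b c x : nat) s : subseq [:: a; b; c] (x :: s) ->
  subseq [:: a; b; c] s \/ (a = x /\ subseq [:: b; c] s).
Proof.
rewrite /=; case: eqP => [->|_] h; last by left.
by right.
Qed.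

Lemma sub_cons2 (a b x : nat) s : subseq [:: a; b] (x :: s) ->
  subseq [:: a; b] s \/ (a = x /\ b \in s).
Proof.
rewrite /=; case: eqP => [->|_] h; last by left.
by right; rewrite -sub1seq.
Qed.

Lemma sub2_mem (a b : nat) s : subseq [:: a; b] s -> a \in s /\ b \in s.
Proof. by move=> /mem_subseq h; split; apply: h; rewrite !inE eqxx ?orbT. Qed.

Lemma sub3_mem (a b c : nat) s : subseq [:: a; b; c] s -> [/\ a \in s, b \in s & c \in s].
Proof. by move=> /mem_subseq h; split; apply: h; rewrite !inE eqxx ?orbT. Qed.

Lemma valid_cat u v : ~ bad u -> ~ bad v -> (forall y z, y \in u -> z \in v -> z < y) ->
  ~ bad (u ++ v).
Proof.
move=> hu hv hlt [a [b [c [hs ht]]]].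
case: (sub3_cat hs) => [h|[h1 h2]|[h1 h2]|h].
- by apply: hu; exists a, b, c.
- have [ha hb] := sub2_mem h1.
  have := hlt _ _ ha h2; have := hlt _ _ hb h2.
  move/tripP: ht; lia.
- have [hb hc] := sub2_mem h2.
  have := hlt _ _ h1 hb; have := hlt _ _ h1 hc.
  move/tripP: ht; lia.
- by apply: hv; exists a, b, c.
Qed.

Lemma valid_x x g : ~ bad g -> (forall y, y \in g -> x < y) -> ~ bad (x :: g).
Proof.
move=> hg hlt [a [b [c [hs ht]]]].
case: (sub_cons3 hs) => [h|[ea h]]; first by apply: hg; exists a, b, c.
have [hb hc] := sub2_mem h.
have := hlt _ hb; have := hlt _ hc; move/tripP: ht; lia.
Qed.

Lemma valid_xx x g : ~ bad g -> (forall y, y \in g -> x < y) -> ~ bad (x :: g ++ [:: x]).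
Proof.
move=> hg hlt [a [b [c [hs ht]]]].
case: (sub_cons3 hs) => [h|[ea h]].
  case: (sub3_cat h) => [h1|[h1 h2]|[h1 h2]|h1].
  - by apply: hg; exists a, b, c.
  - have [ha hb] := sub2_mem h1; move: h2; rewrite inE => /eqP h2.
    have := hlt _ ha; have := hlt _ hb; move/tripP: ht; lia.
  - by move: h2 => /=; case: ifP.
  - by move: h1 => /=; case: ifP.
case: (sub2_cat h) => [h1|[h1 h2]|h1].
- have [hb hc] := sub2_mem h1.
  have := hlt _ hb; have := hlt _ hc; move/tripP: ht; lia.
- move: h2; rewrite inE => /eqP h2.
  have := hlt _ h1; move/tripP: ht; lia.
- by move: h1 => /=; case: ifP.
Qed.



Definition uses lo n (w : seq nat) : bool :=
  all (fun y => lo < y <= lo + n) w && all (fun y => y \in w) (iota lo.+1 n).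

Lemma usesP lo n w : uses lo n w <->
  (forall y, y \in w -> lo < y <= lo + n) /\ (forall y, lo < y <= lo + n -> y \in w).
Proof.
rewrite /uses; split.
  case/andP => /allP h1 /allP h2; split=> // y hy; apply: h2.
  by rewrite mem_iota; lia.
case=> h1 h2; apply/andP; split; apply/allP=> y hy; first exact: h1.
by apply: h2; move: hy; rewrite mem_iota; lia.
Qed.

Definition mx (s : seq nat) := foldr maxn 0 s.

Lemma mx_ge s y : y \in s -> y <= mx s.
Proof.
elim: s => // z s IH; rewrite in_cons => /orP [/eqP ->|/IH h]; rewrite /mx /= -/(mx s); lia.
Qed.


Lemma mx_mem s : s != [::] -> mx s \in s.
Proof.
elim: s => // z s IH _; rewrite /mx /= -/(mx s) in_cons.
case: (eqVneq s [::]) => [-> /=|sne]; first by apply/orP; left; apply/eqP; lia.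
case: (leqP z (mx s)) => h; first by rewrite IH ?orbT.
by rewrite eqxx.
Qed.

Lemma split_first (x : nat) s : x \in s -> exists a r, s = a ++ x :: r /\ x \notin a.
Proof.
elim: s => //= z s IH; rewrite inE; case: (eqVneq x z) => [<- _|nxz /= h].
  by exists [::], s.
have [a [r [-> ha]]] := IH h.
by exists (z :: a), r; rewrite inE negb_or nxz ha.
Qed.

Lemma sub_suf (s u v : seq nat) : subseq s v -> subseq s (u ++ v).
Proof. by move=> h; apply: subseq_trans h (suffix_subseq _ _). Qed.

Lemma decomp lo n w : ~ bad w -> uses lo n.+1 w ->
  exists a g t n1, [/\ w = a ++ lo.+1 :: g ++ t, t = [::] \/ t = [:: lo.+1], n1 <= n &
       [/\ ~ bad a, ~ bad g, uses lo.+1 n1 g & uses (lo.+1 + n1) (n - n1) a]].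
Proof.
move=> hw /usesP [hr hc].
set x := lo.+1.
have hx : x \in w by apply: hc; lia.
have [a [r [ew hxa]]] := split_first hx.
have [g [t [er [hxg ht]]]] : exists g t, r = g ++ t /\ x \notin g /\ (t = [::] \/ t = [:: x]).
  case: (boolP (x \in r)) => hxr; last by exists r, [::]; rewrite cats0; split=> //; split=> //; left.
  have [g [be [er hxg]]] := split_first hxr.
  exists g, [:: x]; split; last by split=> //; right.
  rewrite er in ew *; clear er.
  case: be ew => [|y be] ew; first by [].
  exfalso; apply: hw; exists x, x, y; split.
    rewrite ew; apply: sub_suf => /=; rewrite eqxx; apply: sub_suf => /=.
    by rewrite eqxx /= eqxx sub0seq.
  have : y \in w by rewrite ew mem_cat !inE mem_cat !inE eqxx !orbT.
  move/hr => h; apply: tripI; rewrite /x in h *; lia.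
rewrite er in ew; clear er.
have hta : forall y, y \in t -> y = x.
  by move=> y; case: ht => -> //; rewrite inE => /eqP.
have hwa : forall y, y \in a -> y \in w by move=> y hy; rewrite ew mem_cat hy.
have hwg : forall y, y \in g -> y \in w by move=> y hy; rewrite ew mem_cat inE mem_cat hy !orbT.
have hga : forall y z, y \in a -> z \in g -> z < y.
  move=> y z hy hz; rewrite ltnNge; apply/negP=> hle; apply: hw.
  have hyx : y != x by apply: contraNneq hxa => <-.
  have hzx : z != x by apply: contraNneq hxg => <-.
  have := hr _ (hwa _ hy); have := hr _ (hwg _ hz) => l1 l2.
  exists y, x, z; split.
    rewrite ew -[[:: y; x; z]]/([:: y] ++ [:: x; z]); apply: cat_subseq; first by rewrite sub1seq.
    by rewrite /= eqxx /= sub1seq mem_cat hz.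
  apply: tripI; move: hyx hzx hle l1 l2; rewrite /x; lia.
have hba : ~ bad a by apply: contra_not hw; apply: bad_sub; rewrite ew prefix_subseq.
have hbg : ~ bad g.
  apply: contra_not hw; apply: bad_sub; rewrite ew; apply: sub_suf.
  apply: subseq_trans (subseq_cons _ x); exact: prefix_subseq.
set m := mx g.
have hm : forall y, y \in g -> y <= m by move=> y; exact: mx_ge.
have hgx : forall y, y \in g -> x < y.
  move=> y hy; have := hr _ (hwg _ hy); have : y != x by apply: contraNneq hxg => <-.
  rewrite /x; lia.
have hmle : m <= lo + n.+1.
  case: (eqVneq g [::]) => [eg|gne]; first by rewrite /m eg /=; lia.
  by have := hr _ (hwg _ (mx_mem gne)); lia.
exists a, g, t, (m - x); split=> //.
  by move: hmle; rewrite /x; lia.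
split=> //.
  apply/usesP; split.
    by move=> y hy; have := hm _ hy; have := hgx _ hy; lia.
  move=> y hy.
  have gne : g != [::] by apply/eqP=> eg; move: hy; rewrite /m eg /=; lia.
  have : y \in w by apply: hc; move: hy hmle; rewrite /x; lia.
  rewrite ew mem_cat inE mem_cat => /or3P [ha|/eqP hyx|/orP [//|/hta hyx]].
  - have := hga _ _ ha (mx_mem gne); rewrite -/m; lia.
  - by move: hy; rewrite hyx /x; lia.
  - by move: hy; rewrite hyx /x; lia.
apply/usesP; split.
  move=> y hy; have := hr _ (hwa _ hy).
  have hyx : y != x by apply: contraNneq hxa => <-.
  case: (eqVneq g [::]) => [eg|gne].
    by rewrite /m eg /=; move: hyx; rewrite /x; lia.
  have := hga _ _ hy (mx_mem gne); rewrite -/m; move: hyx hmle; rewrite /x; lia.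
move=> y hy.
have : y \in w by apply: hc; move: hy hmle; rewrite /x; lia.
rewrite ew mem_cat inE mem_cat => /or4P [//|/eqP hyx|hg|/hta hyx].
- by move: hy; rewrite hyx /x; lia.
- by have := hm _ hg; move: hy hmle; rewrite /x; lia.
- by move: hy; rewrite hyx /x; lia.
Qed.


Fixpoint zspec (lo b k : nat) (ws : seq (seq nat)) : Prop :=
  match ws with
  | [::] => b = 0 /\ k = 0
  | w :: ws' => exists n, [/\ n <= b, size w <= k, uses lo n w, ~ bad w &
                 zspec (lo + n) (b - n) (k - size w) ws']
  end.

Definition asm (x : nat) (t : seq nat) (ws : seq (seq nat)) : seq (seq nat) :=
  if ws is g :: a :: rest then (a ++ x :: g ++ t) :: rest else [::].

Fixpoint gen (b : nat) : nat -> nat -> nat -> seq (seq (seq nat)) :=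
  match b with
  | 0 => fun m lo k => if k == 0 then [:: nseq m [::]] else [::]
  | b'.+1 => fix g m lo k {struct m} :=
      match m with
      | 0 => [::]
      | m'.+1 => [seq [::] :: ws | ws <- g m' lo k] ++
          (if k is k'.+1 then [seq asm lo.+1 [::] ws | ws <- gen b' m'.+2 lo.+1 k'] ++
             (if k' is k''.+1 then [seq asm lo.+1 [:: lo.+1] ws | ws <- gen b' m'.+2 lo.+1 k'']
              else [::])
           else [::])
      end
  end.

Lemma gen_S0 b lo k : gen b.+1 0 lo k = [::].
Proof. by []. Qed.

Lemma gen_SS b m lo k : gen b.+1 m.+1 lo k =
  [seq [::] :: ws | ws <- gen b.+1 m lo k] ++
          (if k is k'.+1 then [seq asm lo.+1 [::] ws | ws <- gen b m.+2 lo.+1 k'] ++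
             (if k' is k''.+1 then [seq asm lo.+1 [:: lo.+1] ws | ws <- gen b m.+2 lo.+1 k'']
              else [::])
           else [::]).
Proof. by []. Qed.

Lemma uses0 lo w : uses lo 0 w -> w = [::].
Proof.
case: w => // y w /usesP [h _]; have := h y; rewrite inE eqxx => /(_ isT); lia.
Qed.

Lemma uses_nil lo : uses lo 0 [::].
Proof. by []. Qed.

Lemma zspec0 lo k ws : zspec lo 0 k ws <-> ws = nseq (size ws) [::] /\ k = 0.
Proof.
elim: ws lo k => [|w ws IH] lo k /=; first by split; [case | move=> [_ ->]].
split.
  case=> n [hn hk hu hb hz].
  have n0 : n = 0 by lia.
  rewrite n0 in hu hz; have ew := uses0 hu; rewrite ew /= !subn0 addn0 in hz.
  by have [e1 ->] := (IH _ _).1 hz; rewrite ew {1}e1.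
case=> e ->; case: e => -> e; exists 0; split=> //; first by apply: sub_nil_bad.
by rewrite /= !subn0 addn0; apply/IH; split.
Qed.

Lemma asm_ok lo b k t g a rest : (t = [::] \/ t = [:: lo.+1]) ->
  zspec lo.+1 b k (g :: a :: rest) ->
  zspec lo b.+1 (k + size t).+1 ((a ++ lo.+1 :: g ++ t) :: rest).
Proof.
move=> ht [n1 [hn1 hk1 hu1 hb1 [n2 [hn2 hk2 hu2 hb2 hz]]]].
set x := lo.+1.
have hxt : forall y, y \in t -> y = x by move=> y; case: ht => -> //; rewrite inE => /eqP.
have hst : size t <= 1 by case: ht => ->.
move/usesP: hu1 => [hg1 hg2]; move/usesP: hu2 => [ha1 ha2].
exists (n1 + n2).+1; split.
- lia.
- rewrite size_cat /= size_cat; lia.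
- apply/usesP; split.
    move=> y; rewrite mem_cat inE mem_cat => /or4P [/ha1|/eqP ->|/hg1|/hxt ->]; rewrite /x; lia.
  move=> y hy; rewrite mem_cat inE mem_cat.
  case: (eqVneq y x) => [->|nyx]; first by rewrite /= ?eqxx ?orbT.
  case: (leqP y (x + n1)) => hyn.
    by rewrite hg2 ?orbT //; move: hy nyx; rewrite /x; lia.
  by rewrite ha2 //; move: hy; rewrite /x; lia.
- apply: valid_cat => //.
    case: ht => ->; [rewrite cats0; apply: valid_x | apply: valid_xx] => //.
      by move=> y /hg1; lia.
    by move=> y /hg1; lia.
  move=> y z /ha1 hy; rewrite inE mem_cat => /or3P [/eqP ->|/hg1|/hxt ->]; rewrite /x in hy *; lia.
- move: hz; rewrite size_cat /= size_cat.
  have -> : lo.+1 + n1 + n2 = lo + (n1 + n2).+1 by lia.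
  have -> : b - n1 - n2 = b.+1 - (n1 + n2).+1 by lia.
  by have -> : k - size g - size a = (k + size t).+1 - (size a + (size g + size t).+1) by lia.
Qed.

Lemma genP b : forall m lo k ws, ws \in gen b m lo k <-> size ws = m /\ zspec lo b k ws.
Proof.
elim: b => [|b IHb] m lo k ws.
  rewrite /= zspec0; case: eqP => [->|nk].
    rewrite inE; split; first by move/eqP => ->; rewrite size_nseq.
    by case=> <- [e _]; apply/eqP.
  by split=> // [[_ [_ ek]]].
elim: m lo k ws => [|m IHm] lo k ws.
  by rewrite gen_S0; split=> // [[/size0nil -> []]].
rewrite gen_SS mem_cat; split.
  case/orP.
    case/mapP => v /IHm [hs hz] ->; split; first by rewrite /= hs.
    by exists 0; split=> //; [apply: sub_nil_bad | rewrite addn0 !subn0].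
  case: k => [//|k]; rewrite mem_cat; case/orP.
    case/mapP => v /IHb [hs hz] ->.
    case: v hs hz => [|g [|a rest]] // hs hz; split; first by move: hs => /=; lia.
    by have := asm_ok (or_introl erefl) hz; rewrite addn0.
  case: k => [//|k]; case/mapP => v /IHb [hs hz] ->.
  case: v hs hz => [|g [|a rest]] // hs hz; split; first by move: hs => /=; lia.
  by have := asm_ok (or_intror erefl) hz; rewrite addn1.
case: ws => [|w rest] [hs hzz]; first by [].
case: hs => hs; case: hzz => n [hn hk hu hb hz].
case: n hn hu hz => [|n] hn hu hz.
  have ew := uses0 hu; rewrite ew /= addn0 !subn0 in hz.
  by apply/orP; left; rewrite ew; apply: map_f; apply/IHm.
have [a [g [t [n1 [ew ht hn1 [hba hbg hug hua]]]]]] := decomp hb hu.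
set x := lo.+1.
have hsw : @size nat w = @size nat a + (@size nat g + @size nat t).+1 by rewrite ew size_cat /= size_cat.
set k0 := k - (size t).+1.
have ek : k = (k0 + size t).+1 by rewrite /k0; lia.
have hv : (g :: a :: rest) \in gen b m.+2 x k0.
  apply/IHb; split; first by rewrite /= hs.
  exists n1; split => //; first by lia.
    by lia.
  exists (n - n1); split => //; first by lia.
    by lia.
  move: hz; rewrite /x.
  have -> : lo + n.+1 = lo.+1 + n1 + (n - n1) by lia.
  have -> : b.+1 - n.+1 = b - n1 - (n - n1) by lia.
  by have -> : k - @size nat w = k0 - @size nat g - @size nat a by rewrite /k0; lia.
apply/orP; right; rewrite ek.
case: ht ew => -> ew.
  by rewrite addn0 mem_cat; apply/orP; left; rewrite ew; exact: (map_f (asm x [::]) hv).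
rewrite addn1 mem_cat; apply/orP; right; rewrite ew.
exact: (map_f (asm x [:: x]) hv).
Qed.


Lemma sub_nth2 (w : seq nat) i j : i < j -> j < size w -> subseq [:: nth 0 w i; nth 0 w j] w.
Proof.
elim: w i j => [|y w IH] i j // hij hj.
case: i hij => [|i] hij.
  case: j hij hj => [|j] // _ hj /=; rewrite eqxx sub1seq; by apply: mem_nth; rewrite -ltnS.
case: j hij hj => [|j] // hij hj.
apply: subseq_trans (subseq_cons _ y); apply: IH; [exact: hij | exact: hj].
Qed.

Lemma sub_nth3 (w : seq nat) i j l : i < j -> j < l -> l < size w ->
  subseq [:: nth 0 w i; nth 0 w j; nth 0 w l] w.
Proof.
elim: w i j l => [|y w IH] i j l // hij hjl hl.
case: i hij => [|i] hij.
  case: j hij hjl => [|j] // _ hjl; case: l hjl hl => [|l] // hjl hl /=.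
  rewrite /= eqxx; apply: sub_nth2; [exact: hjl | exact: hl].
case: j hij hjl => [|j] // hij hjl; case: l hjl hl => [|l] // hjl hl.
apply: subseq_trans (subseq_cons _ y); apply: IH; [exact: hij | exact: hjl | exact: hl].
Qed.

Lemma nth_sub2 (w : seq nat) a b : subseq [:: a; b] w ->
  exists i j, [/\ i < j, j < size w, nth 0 w i = a & nth 0 w j = b].
Proof.
elim: w => [|y w IH] //=.
case: eqP => [->|_] h.
  rewrite sub1seq in h; exists 0, (index b w).+1; split => //.
    by rewrite ltnS index_mem.
  by rewrite /= nth_index.
have [i [j [h1 h2 h3 h4]]] := IH h.
by exists i.+1, j.+1.
Qed.

Lemma nth_sub3 (w : seq nat) a b c : subseq [:: a; b; c] w ->
  exists i j l, [/\ i < j, j < l, l < size w & [/\ nth 0 w i = a, nth 0 w j = b & nth 0 w l = c]].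
Proof.
elim: w => [|y w IH] //=.
case: eqP => [->|_] h.
  have [j [l [h1 h2 h3 h4]]] := nth_sub2 h.
  by exists 0, j.+1, l.+1.
have [i [j [l [h1 h2 h3 [h4 h5 h6]]]]] := IH h.
by exists i.+1, j.+1, l.+1.
Qed.


Definition iso (a b c : nat) (p : seq nat) : bool :=
  [forall s : 'I_3, forall t : 'I_3,
     ((nth 0 [:: a; b; c] s < nth 0 [:: a; b; c] t) == (nth 0 p s < nth 0 p t)) &&
     ((nth 0 [:: a; b; c] s == nth 0 [:: a; b; c] t) == (nth 0 p s == nth 0 p t))].

Lemma contains3 w p0 p1 p2 : contains w [:: p0; p1; p2] <->
  exists a b c, subseq [:: a; b; c] w /\ iso a b c [:: p0; p1; p2].
Proof.
split.
  case/existsP => f /forallP H.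
  pose o0 : 'I_3 := @Ordinal 3 0 isT.
  pose o1 : 'I_3 := @Ordinal 3 1 isT.
  pose o2 : 'I_3 := @Ordinal 3 2 isT.
  have key : forall s : 'I_3, nth 0 [:: nth 0 w (f o0); nth 0 w (f o1); nth 0 w (f o2)] s = nth 0 w (f s).
    by move=> [[|[|[|//]]] hs] /=; congr (nth 0 w (f _)); apply: val_inj.
  exists (nth 0 w (f o0)), (nth 0 w (f o1)), (nth 0 w (f o2)); split.
    have /forallP /(_ o1) /and3P [h01 _ _] := H o0.
    have /forallP /(_ o2) /and3P [h12 _ _] := H o1.
    apply: sub_nth3; [exact: (implyP h01 isT) | exact: (implyP h12 isT) | exact: ltn_ord].
  apply/forallP => s; apply/forallP => t; rewrite !key.
  by have /forallP /(_ t) /and3P [_ -> ->] := H s.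
case=> a [b [c [hs hiso]]].
have [i [j [l [hij hjl hl [ha hb hc]]]]] := nth_sub3 hs.
pose oi : 'I_(size w) := Ordinal (ltn_trans hij (ltn_trans hjl hl)).
pose oj : 'I_(size w) := Ordinal (ltn_trans hjl hl).
pose ol : 'I_(size w) := Ordinal hl.
pose f := [ffun s : 'I_3 => nth oi [:: oi; oj; ol] s].
have key : forall s : 'I_3, nth 0 w (f s) = nth 0 [:: a; b; c] s.
  by move=> [[|[|[|//]]] hs'] /=; rewrite ffunE.
have hf : forall s t : 'I_3, s < t -> f s < f t.
  by move=> [[|[|[|//]]] hs1] [[|[|[|//]]] ht1] //= _; rewrite !ffunE /= ?hij ?hjl ?(ltn_trans hij hjl).
apply/existsP; exists f; apply/forallP => s; apply/forallP => t.
rewrite !key; have /forallP /(_ t) /andP [-> ->] := (forallP hiso) s.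
by rewrite !andbT; apply/implyP; exact: hf.
Qed.

Arguments gen : simpl never.

Lemma cat_first (x : nat) a a' s s' : x \notin a -> x \notin a' ->
  a ++ x :: s = a' ++ x :: s' -> a = a' /\ s = s'.
Proof.
elim: a a' => [|y a IH] [|y' a'] /=.
- by move=> _ _ [].
- by move=> _; rewrite inE negb_or => /andP [/eqP nx _] [ex]; case: nx.
- by rewrite inE negb_or => /andP [/eqP nx _] _ [ex]; case: nx.
rewrite !inE !negb_or => /andP [_ ha] /andP [_ ha'] [-> e].
by have [-> ->] := IH _ ha ha' e.
Qed.

Lemma catIr (g g' t : seq nat) : g ++ t = g' ++ t -> g = g'.
Proof.
move=> e; have hs : size g = size g' by move/(congr1 size): e; rewrite !size_cat; lia.
by move/(congr1 (take (size g))): e; rewrite take_size_cat // take_size_cat.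
Qed.

Lemma gen_mem2 b m lo k v : v \in gen b m.+2 lo.+1 k ->
  exists g a rest, [/\ v = g :: a :: rest, lo.+1 \notin g & lo.+1 \notin a].
Proof.
case/genP => hs.
case: v hs => [|g [|a rest]] // _ [n1 [_ _ hu1 _ [n2 [_ _ hu2 _ _]]]].
exists g, a, rest; split => //.
  by apply/negP => /((usesP _ _ _).1 hu1).1; lia.
by apply/negP => /((usesP _ _ _).1 hu2).1; lia.
Qed.

Lemma asm_inj b m lo k t : {in gen b m.+2 lo.+1 k &, injective (asm lo.+1 t)}.
Proof.
move=> v v' /gen_mem2 [g [a [r [-> hg ha]]]] /gen_mem2 [g' [a' [r' [-> hg' ha']]]] /=.
case=> e ->; have [-> e2] := cat_first ha ha' e.
by rewrite (catIr e2).
Qed.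

Lemma gen_uniq b : forall m lo k, uniq (gen b m lo k).
Proof.
elim: b => [|b IHb] m lo k; first by rewrite /gen; case: ifP.
elim: m lo k => [|m IHm] lo k; first by [].
rewrite gen_SS cat_uniq map_inj_uniq ?IHm; last by move=> ? ? [].
have hA : forall ws, ws \in [seq [::] :: ws | ws <- gen b.+1 m lo k] -> head [::] ws = [::].
  by move=> ws /mapP [v _ ->].
have hB : forall t k' ws, ws \in [seq asm lo.+1 t v | v <- gen b m.+2 lo.+1 k'] ->
    exists g a rest, [/\ ws = (a ++ lo.+1 :: g ++ t) :: rest, lo.+1 \notin g & lo.+1 \notin a].
  by move=> t k' ws /mapP [v /gen_mem2 [g [a [r [-> hg ha]]]] ->]; exists g, a, r.
move: hA; case: k => [|k] hA; first by [].
move: hA; case: k => [|k] hA.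
  rewrite cats0 map_inj_in_uniq ?IHb ?andbT; last exact: asm_inj.
  apply/hasPn => ws /hB [g [a [r [-> _ _]]]].
  by apply/negP => /hA /=; case: a.
rewrite cat_uniq !map_inj_in_uniq ?IHb; try exact: asm_inj.
apply/and3P; split => //.
  apply/hasPn => ws; rewrite mem_cat => /orP [] /hB [g [a [r [-> _ _]]]];
  by apply/negP => /hA /=; case: a.
apply/and3P; split => //.
apply/hasPn => ws /hB [g [a [r [-> hg ha]]]]; apply/negP => /hB [g' [a' [r' [[e _] hg' ha']]]].
move/(congr1 (count_mem lo.+1)): e.
rewrite !count_cat /= !count_cat /= eqxx.
move/count_memPn: hg => ->; move/count_memPn: ha => ->.
move/count_memPn: hg' => ->; move/count_memPn: ha' => ->.
by [].
Qed.



Definition G m n := 'C(n.*2 + m - 1, n) - (if n is n'.+1 then 'C(n.*2 + m - 1, n') else 0).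
Definition F m b k := G m b * 'C(b, k - b) * (b <= k).

Lemma bin_mono N j : j.+1 <= N - j -> 'C(N, j) <= 'C(N, j.+1).
Proof.
move=> h; have e := mul_bin_left N j.
have : j.+1 * 'C(N, j) <= j.+1 * 'C(N, j.+1) by rewrite e leq_mul2r h orbT.
by rewrite leq_mul2l.
Qed.

Lemma G0 m : G m 0 = 1.
Proof. by rewrite /G bin0. Qed.

Lemma G0S n : G 0 n.+1 = 0.
Proof.
rewrite /G addn0 (_ : n.+1.*2 - 1 = n.*2.+1) ?doubleS //.
have := bin_sub (_ : n <= n.*2.+1); rewrite (_ : n.*2.+1 - n = n.+1) => [->|]; lia.
Qed.

Lemma Grec m n : G m.+1 n.+1 = G m n.+1 + G m.+2 n.
Proof.
rewrite /G.
set N := n.*2 + m.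
have e1 : n.+1.*2 + m.+1 - 1 = N.+2 by rewrite /N doubleS; lia.
have e2 : n.+1.*2 + m - 1 = N.+1 by rewrite /N doubleS; lia.
have e3 : n.*2 + m.+2 - 1 = N.+1 by rewrite /N; lia.
rewrite e1 e2 e3 (binS N.+1 n).
have m1 : 'C(N.+1, n) <= 'C(N.+1, n.+1) by apply: bin_mono; rewrite /N; lia.
case: n @N e1 e2 e3 m1 => [|n] N e1 e2 e3 m1.
  rewrite !bin0 /= in m1 *; lia.
rewrite (binS N.+1 n).
have m2 : 'C(N.+1, n) <= 'C(N.+1, n.+1) by apply: bin_mono; rewrite /N; lia.
lia.
Qed.

Lemma Frec m b k : F m.+1 b.+1 k =
  F m b.+1 k + (if k is k'.+1 then F m.+2 b k' + (if k' is k''.+1 then F m.+2 b k'' else 0) else 0).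
Proof.
rewrite /F Grec.
case: k => [|k]; first by rewrite !muln0.
case: (leqP b k) => hbk; last first.
  have h2 : (b <= k) = false by apply/negbTE; rewrite -ltnNge.
  rewrite ltnS h2 !muln0; case: k hbk h2 => [|k] hbk h2 //.
  by rewrite (_ : (b <= k) = false) ?muln0 //; apply/negbTE; rewrite -ltnNge; lia.
rewrite ltnS hbk !muln1.
have [ek|lt] := eqVneq k b.
  rewrite ek subnn bin0 !muln1; case: b ek hbk => [|b] ek hbk.
    by rewrite subnn bin0 muln1 addn0.
  by rewrite subnn bin0 muln1 ltnn muln0 addn0.
case: k hbk lt => [|k] hbk lt; first by move: hbk lt; case: b.
have hbk' : b <= k by lia.
rewrite hbk' muln1 (_ : k.+2 - b.+1 = (k - b).+1) ?binS; last by lia.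
rewrite (_ : k.+1 - b = (k - b).+1); last by lia.
rewrite !mulnDl !mulnDr; lia.
Qed.

Lemma size_gen b : forall m lo k, size (gen b m lo k) = F m b k.
Proof.
elim: b => [|b IHb] m lo k.
  by rewrite /F G0 mul1n subn0 bin0n muln1 /gen; case: eqP.
elim: m lo k => [|m IHm] lo k.
  by rewrite gen_S0 /F G0S.
rewrite gen_SS Frec size_cat size_map IHm.
congr (_ + _); case: k => [|k] //.
rewrite size_cat !size_map IHb; congr (_ + _).
by case: k => [|k] //; rewrite size_map IHb.
Qed.



Lemma G1 b : G 1 b = catalan b.
Proof.
have -> : catalan b = (b.+1 * G 1 b) %/ b.+1.
  rewrite /catalan /G addn1 /=; congr (_ %/ _).
  case: b => [|b]; first by [].
  have e := mul_bin_left (b.+1).*2 b.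
  rewrite (_ : (b.+1).*2 - b = b.+2) in e; last by rewrite doubleS; lia.
  have m : 'C(b.+1.*2, b) <= 'C(b.+1.*2, b.+1) by apply: bin_mono; rewrite doubleS; lia.
  by rewrite mulnBr -e -mulnBl subSnn mul1n.
by rewrite mulKn.
Qed.


Lemma iso_facts a b c p0 p1 p2 : iso a b c [:: p0; p1; p2] ->
  [/\ ((a < b) = (p0 < p1)) /\ ((a == b) = (p0 == p1)),
      ((b < c) = (p1 < p2)) /\ ((b == c) = (p1 == p2)) &
      ((a < c) = (p0 < p2)) /\ ((a == c) = (p0 == p2))].
Proof.
move/forallP => H.
have /forallP /(_ (@Ordinal 3 1 isT)) /andP [/eqP h1 /eqP h2] := H (@Ordinal 3 0 isT).
have /forallP /(_ (@Ordinal 3 2 isT)) /andP [/eqP h3 /eqP h4] := H (@Ordinal 3 1 isT).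
have /forallP /(_ (@Ordinal 3 2 isT)) /andP [/eqP h5 /eqP h6] := H (@Ordinal 3 0 isT).
by [].
Qed.

Ltac iso_tac := apply/forallP => -[[|[|[|//]]] ?]; apply/forallP => -[[|[|[|//]]] ?] /=;
  apply/andP; split; apply/eqP; lia.

Lemma iso111 a b c : iso a b c [:: 1; 1; 1] <-> a = b /\ b = c.
Proof.
split; first by case/iso_facts => /= [[_ /eqP h1] [_ /eqP h2] _].
by case=> h1 h2; iso_tac.
Qed.

Lemma iso212 a b c : iso a b c [:: 2; 1; 2] <-> a = c /\ b < a.
Proof.
split; last by case=> h1 h2; iso_tac.
case/iso_facts => /= [[h1 h2] [h3 h4] [h5 h6]]; split; [apply/eqP; lia | lia].
Qed.

Lemma iso112 a b c : iso a b c [:: 1; 1; 2] <-> a = b /\ a < c.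
Proof.
split; last by case=> h1 h2; iso_tac.
case/iso_facts => /= [[h1 h2] [h3 h4] [h5 h6]]; split; [apply/eqP; lia | lia].
Qed.

Lemma iso213 a b c : iso a b c [:: 2; 1; 3] <-> b < a /\ a < c.
Proof.
split; last by case=> h1 h2; iso_tac.
case/iso_facts => /= [[h1 h2] [h3 h4] [h5 h6]]; split; lia.
Qed.

Lemma avoids4 w : [&& avoids w [:: 1; 1; 1], avoids w [:: 2; 1; 2],
                      avoids w [:: 1; 1; 2] & avoids w [:: 2; 1; 3]] <-> ~ bad w.
Proof.
rewrite /avoids; split.
  case/and4P => n1 n2 n3 n4 [a [b [c [hs /tripP ht]]]].
  case: ht => [h|[h|[h|h]]].
  - by move/negP: n1; apply; apply/contains3; exists a, b, c; split => //; apply/iso111.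
  - by move/negP: n2; apply; apply/contains3; exists a, b, c; split => //; apply/iso212.
  - by move/negP: n3; apply; apply/contains3; exists a, b, c; split => //; apply/iso112.
  - by move/negP: n4; apply; apply/contains3; exists a, b, c; split => //; apply/iso213.
move=> hb; apply/and4P; split; apply/negP => /contains3 [a [b [c [hs hi]]]];
  apply: hb; exists a, b, c; split => //; apply: tripI.
- by move/iso111: hi; lia.
- by move/iso212: hi; lia.
- by move/iso112: hi; lia.
- by move/iso213: hi; lia.
Qed.


Lemma zspec1 b k w : zspec 0 b k [:: w] <-> [/\ size w = k, uses 0 b w & ~ bad w].
Proof.
split.
  case=> n [hn hk hu hb [h1 h2]].
  have -> : b = n by lia.
  by split => //; lia.
case=> hs hu hb; exists b; split => //; first by rewrite hs.
by rewrite /= subnn hs subnn.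
Qed.

Theorem mainTheorem10 (b k : nat) (hb : 1 <= b) (hbk : b <= k) :
  #|[set w : k.-tuple 'I_b |
      [&& [forall i : 'I_b, i \in w],
          avoids (word_of w) [:: 1; 1; 1],
          avoids (word_of w) [:: 2; 1; 2],
          avoids (word_of w) [:: 1; 1; 2] &
          avoids (word_of w) [:: 2; 1; 3]]]|
  = 'C(b, k - b) * catalan b.
Proof.
case: b hb hbk => [//|b] _ hbk.
set S := [set w : k.-tuple 'I_b.+1 | _].
have -> : 'C(b.+1, k - b.+1) * catalan b.+1 = size (gen b.+1 1 0 k).
  by rewrite size_gen /F G1 hbk muln1 mulnC.
rewrite cardE -(size_map (fun t => [:: word_of t])).
apply: perm_size; apply: uniq_perm.
- rewrite map_inj_uniq ?enum_uniq //.
  move=> t t' [] /(inj_map (_ : injective (fun i : 'I_b.+1 => (val i).+1))) e.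
  by apply: val_inj; apply: e => i j [] /val_inj.
- exact: gen_uniq.
move=> ws; apply/idP/idP.
  case/mapP => t; rewrite mem_enum /S inE => /andP [/forallP hall hav] ->.
  apply/genP; split => //; apply/zspec1; split.
  - by rewrite /word_of size_map size_tuple.
  - apply/usesP; split.
      by move=> y /mapP [i _ ->]; rewrite add0n /= ltn_ord.
    move=> y hy; have hi := hall (inord y.-1).
    rewrite /word_of (_ : y = (nat_of_ord (inord y.-1 : 'I_b.+1)).+1); first exact: map_f.
    by rewrite inordK; lia.
  - by apply/avoids4.
case/genP => hs; case: ws hs => [|w [|? ?]] // _ /zspec1 [hsz hu hbad].
have hsz' : size (map (fun y => inord y.-1 : 'I_b.+1) w) == k by rewrite size_map hsz.
set t := Tuple hsz'.
have ew : word_of t = w.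
  rewrite /word_of /= -map_comp; rewrite -[RHS]map_id; apply/eq_in_map => y hy /=.
  have h := ((usesP _ _ _).1 hu).1 _ hy; rewrite inordK; lia.
apply/mapP; exists t; last by rewrite ew.
rewrite mem_enum /S inE ew; apply/andP; split; last by apply/avoids4.
apply/forallP => i.
have : (val i).+1 \in w.
  by apply: ((usesP _ _ _).1 hu).2; rewrite add0n /= ltn_ord.
rewrite -ew /word_of mem_map //.
by move=> i1 i2 [] /val_inj.
Qed.
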